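(* Fix nonnegative integers $\lambda_2\ge\mu_2\ge\nu_2$. For an integer $\lambda_1\ge\lambda_2$, let $N=\lambda_1+\lambda_2$ and consider the partitions $\lambda=(\lambda_1,\lambda_2)$, $\mu=(N-\mu_2,\mu_2)$, $\nu=(N-\nu_2,\nu_2)$ of $N$. Then $g_{\mu,\nu,\lambda}$ is independent of $\lambda_1$ for all $\lambda_1\ge\mu_2+\nu_2$, and this stable value equals $$p_S(\nu_2,\nu_2+\mu_2-\lambda_2)-p_S(\nu_2,\nu_2+\mu_2-\lambda_2-1)=\begin{cases}\lfloor \ell/2\rfloor+1&\text{if } \ell\ge0,\\ 0&\text{if }\ell<0,\end{cases}\qquad\text{where } \ell=\nu_2+\mu_2-\lambda_2 .$$
   Context: The Kronecker coefficient $g_{\mu,\nu,\lambda}$ (for $\ell(\mu),\ell(\nu)\le2$, $\ell(\lambda)\le4$, same weight, parts padded with zeros) is defined by $s_\lambda(x_1y_1,x_1y_2,x_2y_1,x_2y_2)=\sum_{\mu,\nu}g_{\mu,\nu,\lambda}\,s_\mu(x_1,x_2)s_\nu(y_1,y_2)$, with $s$ the Schur polynomials. For integers $n,m$, $p_S(n,m)$ is the number of $(x_1,\dots,x_4)\in\mathbb{Z}_{\ge0}^4$ with $x_1+x_3+x_4=n$, $x_2+x_3+2x_4=m$ (zero if $n<0$ or $m<0$). *)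

(* Defs.v *)
From HB Require Import structures.
From mathcomp Require Import all_boot all_order all_algebra.
Set Implicit Arguments. Unset Strict Implicit. Unset Printing Implicit Defensive.
Import Order.TTheory GRing.Theory Num.Theory.

(* A partition is a weakly decreasing seq nat (trailing zeros allowed).
   Cell (i,j) (0-based) belongs to the Young diagram of la iff j < la_i. *)
Definition incell (la : seq nat) (i j : nat) : bool := j < nth 0 la i.

(* Fillings of the rectangle 'I_(size la) x 'I_(head 0 la) (which contains the
   diagram of a partition la) with letters in 'I_n; cells outside the diagram
   are forced to hold 0 so that fillings of the diagram are counted once. *)
Definition filling (n : nat) (la : seq nat) :=
  {ffun 'I_(size la) * 'I_(head 0 la) -> 'I_n}.

Definition is_ssyt (n : nat) (la : seq nat) (t : filling n la) : bool :=
  [forall c : 'I_(size la) * 'I_(head 0 la), ~~ incell la c.1 c.2 ==> (val (t c) == 0)] &&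
  [forall c : 'I_(size la) * 'I_(head 0 la), [forall c' : 'I_(size la) * 'I_(head 0 la),
     (incell la c.1 c.2 && incell la c'.1 c'.2) ==>
       ((((val c.1 == val c'.1) && (val c.2 < val c'.2)) ==> (val (t c) <= val (t c'))) &&
        (((val c.2 == val c'.2) && (val c.1 < val c'.1)) ==> (val (t c) < val (t c'))))]].

Definition schur (R : comNzRingType) (n : nat) (la : seq nat) (z : 'I_n -> R) : R :=
  (\sum_(t : filling n la | is_ssyt t)
     \prod_(c : 'I_(size la) * 'I_(head 0 la) | incell la c.1 c.2) z (t c))%R.

Arguments schur {R} n la z.

Definition Rxy := {poly {poly {poly {poly int}}}}.
Definition x1 : Rxy := polyX _.
Definition x2 : Rxy := polyC (polyX _).
Definition y1 : Rxy := polyC (polyC (polyX _)).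
Definition y2 : Rxy := polyC (polyC (polyC (polyX _))).

Definition xs (i : 'I_2) : Rxy := nth 0%R [:: x1; x2] i.
Definition ys (i : 'I_2) : Rxy := nth 0%R [:: y1; y2] i.
Definition xys (i : 'I_4) : Rxy :=
  nth 0%R [:: (x1 * y1)%R; (x1 * y2)%R; (x2 * y1)%R; (x2 * y2)%R] i.

(* g is a family of Kronecker coefficients: for every partition la with at
   most 4 parts,
   s_la(x1y1,x1y2,x2y1,x2y2) = sum_{mu,nu} g mu nu la s_mu(x1,x2) s_nu(y1,y2),
   the sum being over the two-row partitions mu = (N-k,k), nu = (N-l,l) of
   N = |la|.  (Since the s_mu(x)s_nu(y) are linearly independent, this
   determines g mu nu la uniquely on these arguments.) *)
Definition kronecker_spec (g : seq nat -> seq nat -> seq nat -> int) : Prop :=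
  forall la : seq nat, size la <= 4 -> sorted geq la ->
    let N := sumn la in
    schur 4 la xys =
    (\sum_(k < N./2.+1) \sum_(l < N./2.+1)
       (g [:: (N - k)%N; nat_of_ord k] [:: (N - l)%N; nat_of_ord l] la)%:~R
         * (schur 2 [:: (N - k)%N; nat_of_ord k] xs
            * schur 2 [:: (N - l)%N; nat_of_ord l] ys))%R.

Definition pS_nat (n m : nat) : nat :=
  #|[set x : 'I_(n + m).+1 * 'I_(n + m).+1 * 'I_(n + m).+1 * 'I_(n + m).+1 |
     (x.1.1.1 + x.1.2 + x.2 == n) && (x.1.1.2 + x.1.2 + 2 * x.2 == m)]|.

Definition pS (n m : int) : nat :=
  match n, m with
  | Posz a, Posz b => pS_nat a b
  | _, _ => 0
  end.

(* Main.v *)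
Require Import Defs.
From HB Require Import structures.
From mathcomp Require Import all_boot all_order all_algebra.
From mathcomp Require Import zify ring.
Import Order.TTheory GRing.Theory Num.Theory.
Set Implicit Arguments. Unset Strict Implicit.

Lemma card_ord_lt L m : m <= L -> #|[set j : 'I_L | j < m]| = m.
Proof.
move=> hm; rewrite -sum1_card.
rewrite (eq_bigl (fun j : 'I_L => j < m)); last by move=> j; rewrite inE.
rewrite -(big_mkord (fun j => j < m) (fun _ => 1)).
rewrite (eq_bigl (fun i => predT i && (i < m))) //.
by rewrite -big_nat_widen // sum_nat_const_nat muln1 subn0.
Qed.

Lemma cnt_le L L' (f : 'I_L -> nat) (j : 'I_L) v :
  L' <= L -> j < L' ->
  (forall a b : 'I_L, a <= b -> b < L' -> f a <= f b) ->
  (#|[set j' : 'I_L | (j' < L') && (f j' < v)]| <= j) = (v <= f j).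
Proof.
move=> hL hj mono; case: (leqP v (f j)) => H.
- rewrite -(card_ord_lt (ltnW (ltn_ord j))).
  apply: subset_leq_card; apply/subsetP => a; rewrite !inE => /andP[ha hfa].
  rewrite ltnNge; apply/negP => hja.
  have := mono _ _ hja ha; lia.
- apply/negbTE; rewrite -ltnNge.
  have hjL : j.+1 <= L by exact: ltn_ord.
  suff sub : [set a : 'I_L | a < j.+1] \subset [set j' : 'I_L | (j' < L') && (f j' < v)].
    by have := subset_leq_card sub; rewrite card_ord_lt.
  apply/subsetP => a; rewrite !inE => ha.
  have haL' : a < L' by lia.
  rewrite haL' /=.
  have hm : a <= j by lia.
  have := mono _ _ hm hj; lia.
Qed.

Definition r0 : 'I_2 := ord0.
Definition r1 : 'I_2 := ord_max.

Lemma ord2P (i : 'I_2) : i = r0 \/ i = r1.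
Proof.
case: i => [[|[|k]] hk]; [left|right|by []]; by apply: val_inj.
Qed.

Definition tval n L1 L2 (t : filling n [:: L1; L2]) (i : 'I_2) (j : 'I_L1) : nat :=
  nat_of_ord (t (i, j)).

Lemma ssyt2P n L1 L2 (t : filling n [:: L1; L2]) : is_ssyt t ->
  [/\ forall j : 'I_L1, L2 <= j -> tval t r1 j = 0,
      forall a b : 'I_L1, a <= b -> tval t r0 a <= tval t r0 b,
      forall a b : 'I_L1, a <= b -> b < L2 -> tval t r1 a <= tval t r1 b &
      forall j : 'I_L1, j < L2 -> tval t r0 j < tval t r1 j].
Proof.
rewrite /tval; move=> /andP[/forallP H0 /forallP H1]; split.
- move=> j hj; have := H0 (r1, j); rewrite /incell /= ltnNge hj /=.
  by move/eqP.
- move=> a b hab; have [hlt|hge] := ltnP a b; last first.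
    by have -> : a = b by apply/val_inj/eqP; rewrite eqn_leq hab hge.
  have /forallP := H1 (r0, a) => /(_ (r0, b)).
  rewrite /incell /= (ltn_ord a) (ltn_ord b) /= hlt /=.
  by case/andP.
- move=> a b hab hb; have [hlt|hge] := ltnP a b; last first.
    by have -> : a = b by apply/val_inj/eqP; rewrite eqn_leq hab hge.
  have /forallP := H1 (r1, a) => /(_ (r1, b)).
  rewrite /incell /= hb (leq_ltn_trans hab hb) /= hlt /=.
  by case/andP.
- move=> j hj.
  have /forallP := H1 (r0, j) => /(_ (r1, j)).
  rewrite /incell /= hj (ltn_ord j) /= eqxx /=.
  by [].
Qed.

Definition tv4 L1 L2 (p1 p2 p3 q1 q2 : nat) (i j : nat) : nat :=
  if i == 0 then (L1 - (p1+p2+p3) <= j) + (L1 - (p2+p3) <= j) + (L1 - p3 <= j)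
  else if j < L2 then (1 + (q1 <= j) + (q1 + q2 <= j))%N else 0.

Lemma tv4_lt L1 L2 p1 p2 p3 q1 q2 i j : tv4 L1 L2 p1 p2 p3 q1 q2 i j < 4.
Proof. rewrite /tv4; case: ifP => _; [|case: ifP => _]; lia. Qed.

Definition dat (B : nat) := ('I_B * 'I_B * 'I_B * 'I_B * 'I_B)%type.

Lemma prod_split4 (R : comNzRingType) (G : nat -> R) (b1 b2 b3 L : nat) (x0 x1 x2 x3 : R) :
  b1 <= b2 -> b2 <= b3 -> b3 <= L ->
  (forall j, j < b1 -> G j = x0) -> (forall j, b1 <= j < b2 -> G j = x1) ->
  (forall j, b2 <= j < b3 -> G j = x2) -> (forall j, b3 <= j < L -> G j = x3) ->
  (\prod_(0 <= j < L) G j = x0 ^+ b1 * x1 ^+ (b2 - b1) * x2 ^+ (b3 - b2) * x3 ^+ (L - b3))%R.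
Proof.
move=> h12 h23 h3L H0 H1 H2 H3.
rewrite (@big_cat_nat _ _ _ b3 0 L) // (@big_cat_nat _ _ _ b2 0 b3) //.
rewrite (@big_cat_nat _ _ _ b1 0 b2) //.
have E0 : (\prod_(0 <= i < b1) G i = x0 ^+ b1)%R.
  by rewrite (eq_big_nat _ _ (F2 := fun _ => x0)) ?prodr_const_nat ?subn0 // => j /andP[_ ?]; apply: H0.
have E1 : (\prod_(b1 <= i < b2) G i = x1 ^+ (b2 - b1))%R.
  by rewrite (eq_big_nat _ _ (F2 := fun _ => x1)) ?prodr_const_nat.
have E2 : (\prod_(b2 <= i < b3) G i = x2 ^+ (b3 - b2))%R.
  by rewrite (eq_big_nat _ _ (F2 := fun _ => x2)) ?prodr_const_nat.
have E3 : (\prod_(b3 <= i < L) G i = x3 ^+ (L - b3))%R.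
  by rewrite (eq_big_nat _ _ (F2 := fun _ => x3)) ?prodr_const_nat.
by rewrite E0 E1 E2 E3.
Qed.

Section Four.
Variables L1 L2 : nat.

Definition build4 (d : dat L1.+1) : filling 4 [:: L1; L2] :=
  [ffun c : 'I_2 * 'I_L1 => inord (tv4 L1 L2 d.1.2 d.2 d.1.1.1.1 d.1.1.1.2 d.1.1.2 c.1 c.2)].

Lemma build4E d (c : 'I_2 * 'I_L1) : val (build4 d c) =
   tv4 L1 L2 d.1.2 d.2 d.1.1.1.1 d.1.1.1.2 d.1.1.2 c.1 c.2.
Proof. by rewrite ffunE; apply: inordK; apply: tv4_lt. Qed.

Lemma tval_build4 d i j : tval (build4 d) i j =
   tv4 L1 L2 d.1.2 d.2 d.1.1.1.1 d.1.1.1.2 d.1.1.2 i j.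
Proof. exact: build4E. Qed.

Definition D4 (p1 p2 p3 q1 q2 : nat) : bool :=
  [&& p1+p2+p3 <= L1, q1+q2 <= L2, q1 <= L1-(p1+p2+p3),
      q1+q2 <= L1-(p2+p3) & L2 <= L1 - p3].

Definition D4d (d : dat L1.+1) := D4 d.1.2 d.2 d.1.1.1.1 d.1.1.1.2 d.1.1.2.

Lemma build4_ssyt d : L2 <= L1 -> D4d d -> is_ssyt (build4 d).
Proof.
case: d => [[[[p3 q1] q2] p1] p2] hL; rewrite /D4d /D4 /= => hD.
apply/andP; split.
- apply/forallP => -[i j]; rewrite /incell !build4E /=.
  have := ltn_ord j.
  case: (ord2P i) => -> /=; rewrite /tv4 /=; repeat case: ifP => /=; lia.
- apply/forallP => -[i j]; apply/forallP => -[i' j']; rewrite /incell !build4E /=.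
  have := ltn_ord j; have := ltn_ord j'.
  case: (ord2P i) => ->; case: (ord2P i') => -> /=; rewrite /tv4 /=;
  repeat case: ifP => /= ; lia.
Qed.

Definition cnt0 (t : filling 4 [:: L1; L2]) v :=
  #|[set j : 'I_L1 | (j < L1) && (tval t r0 j < v)]|.
Definition cnt1 (t : filling 4 [:: L1; L2]) v :=
  #|[set j : 'I_L1 | (j < L2) && (tval t r1 j < v)]|.

Lemma cnt0_le t v : cnt0 t v <= L1.
Proof. by rewrite /cnt0; apply: leq_trans (max_card _) _; rewrite card_ord. Qed.

Lemma cnt1_le t v : L2 <= L1 -> cnt1 t v <= L2.
Proof.
move=> hL; rewrite /cnt1 -[X in _ <= X](card_ord_lt hL); apply: subset_leq_card.
by apply/subsetP => j; rewrite !inE => /andP[].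
Qed.

Lemma cnt0_mono t v w : v <= w -> cnt0 t v <= cnt0 t w.
Proof.
move=> h; apply: subset_leq_card; apply/subsetP => j; rewrite !inE.
case/andP => -> /= hj; exact: leq_trans hj h.
Qed.

Lemma cnt1_mono t v w : v <= w -> cnt1 t v <= cnt1 t w.
Proof.
move=> h; apply: subset_leq_card; apply/subsetP => j; rewrite !inE.
case/andP => -> /= hj; exact: leq_trans hj h.
Qed.

Definition counts4 (t : filling 4 [:: L1; L2]) : dat L1.+1 :=
  (inord (L1 - cnt0 t 3), inord (cnt1 t 2), inord (cnt1 t 3 - cnt1 t 2),
   inord (cnt0 t 2 - cnt0 t 1), inord (cnt0 t 3 - cnt0 t 2)).

Lemma build4_counts t : L2 <= L1 -> is_ssyt t -> build4 (counts4 t) = t.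
Proof.
move=> hL hs; have [Z M0 M1 C] := ssyt2P hs.
have h01 := cnt0_mono t (leqnSn 1); have h02 := cnt0_mono t (leqnSn 2).
have h03 := cnt0_le t 3.
have h11 := cnt1_mono t (leqnSn 2); have h12 := cnt1_le t 3 hL.
suff H : forall (i : 'I_2) (j : 'I_L1), val (build4 (counts4 t) (i, j)) = val (t (i, j)).
  by apply/ffunP => -[i j]; apply: val_inj; exact: H.
move=> i j; rewrite build4E /= !inordK; try lia.
have hj := ltn_ord j.
case: (ord2P i) => -> /=; rewrite /tv4 /=.
- have e1 : (cnt0 t 1 <= j) = (1 <= tval t r0 j) :=
    @cnt_le L1 L1 (tval t r0) j 1 (leqnn _) hj (fun a b h _ => M0 a b h).
  have e2 : (cnt0 t 2 <= j) = (2 <= tval t r0 j) :=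
    @cnt_le L1 L1 (tval t r0) j 2 (leqnn _) hj (fun a b h _ => M0 a b h).
  have e3 : (cnt0 t 3 <= j) = (3 <= tval t r0 j) :=
    @cnt_le L1 L1 (tval t r0) j 3 (leqnn _) hj (fun a b h _ => M0 a b h).
  rewrite -[RHS]/(tval t r0 j).
  have : tval t r0 j < 4 by exact: ltn_ord.
  lia.
- case: ifP => hjL; last by rewrite -[RHS]/(tval t r1 j) Z // leqNgt hjL.
  have e2 : (cnt1 t 2 <= j) = (2 <= tval t r1 j) :=
    @cnt_le L1 L2 (tval t r1) j 2 hL hjL M1.
  have e3 : (cnt1 t 3 <= j) = (3 <= tval t r1 j) :=
    @cnt_le L1 L2 (tval t r1) j 3 hL hjL M1.
  rewrite -[RHS]/(tval t r1 j).
  have hC : tval t r0 j < tval t r1 j := C j hjL.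
  have : tval t r1 j < 4 by exact: ltn_ord.
  lia.
Qed.

Lemma counts4_D t : L2 <= L1 -> is_ssyt t -> D4d (counts4 t).
Proof.
move=> hL hs; have [Z M0 M1 C] := ssyt2P hs.
have h01 := cnt0_mono t (leqnSn 1); have h02 := cnt0_mono t (leqnSn 2).
have h03 := cnt0_le t 3.
have h11 := cnt1_mono t (leqnSn 2); have h12 := cnt1_le t 3 hL.
have c21 : cnt1 t 2 <= cnt0 t 1.
  apply: subset_leq_card; apply/subsetP => j; rewrite !inE => /andP[hj hg].
  rewrite (ltn_ord j) /=; have := C j hj; lia.
have c32 : cnt1 t 3 <= cnt0 t 2.
  apply: subset_leq_card; apply/subsetP => j; rewrite !inE => /andP[hj hg].
  rewrite (ltn_ord j) /=; have := C j hj; lia.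
have c3 : L2 <= cnt0 t 3.
  rewrite -[X in X <= _](card_ord_lt hL).
  apply: subset_leq_card; apply/subsetP => j; rewrite !inE => hj.
  rewrite (ltn_ord j) /=; have := C j hj; have : tval t r1 j < 4 by exact: ltn_ord.
  lia.
rewrite /D4d /D4 /= !inordK; lia.
Qed.

Lemma counts4_build d : L2 <= L1 -> D4d d -> counts4 (build4 d) = d.
Proof.
case: d => [[[[p3 q1] q2] p1] p2] hL; rewrite /D4d /D4 /= => hD.
have hp1 := ltn_ord p1; have hp2 := ltn_ord p2; have hp3 := ltn_ord p3.
have hq1 := ltn_ord q1; have hq2 := ltn_ord q2.
have E0 : forall v m, m <= L1 -> (forall j : 'I_L1,
   (tv4 L1 L2 p1 p2 p3 q1 q2 0 j < v) = (j < m)) -> cnt0 (build4 (p3, q1, q2, p1, p2)) v = m.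
  move=> v m hm H; rewrite /cnt0 -[RHS](card_ord_lt hm); apply: eq_card => j.
  by rewrite !inE tval_build4 /= (ltn_ord j) H.
have E1 : forall v m, m <= L1 -> (forall j : 'I_L1,
   (j < L2) && (tv4 L1 L2 p1 p2 p3 q1 q2 1 j < v) = (j < m)) -> cnt1 (build4 (p3, q1, q2, p1, p2)) v = m.
  move=> v m hm H; rewrite /cnt1 -[RHS](card_ord_lt hm); apply: eq_card => j.
  by rewrite !inE tval_build4 /= H.
rewrite /counts4.
rewrite (E0 1 (L1 - (p1+p2+p3))); [|lia| move=> j; rewrite /tv4 /=; lia].
rewrite (E0 2 (L1 - (p2+p3))); [|lia| move=> j; rewrite /tv4 /=; lia].
rewrite (E0 3 (L1 - p3)); [|lia| move=> j; rewrite /tv4 /=; lia].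
rewrite (E1 2 q1); [|lia| move=> j; rewrite /tv4 /=; case: ifP; lia].
rewrite (E1 3 (q1 + q2)); [|lia| move=> j; rewrite /tv4 /=; case: ifP; lia].
congr (_, _, _, _, _); apply: val_inj; rewrite /= inordK; lia.
Qed.

Definition mono4 (R : comNzRingType) (z : 'I_4 -> R) (p1 p2 p3 q1 q2 : nat) : R :=
  (z (inord 0) ^+ (L1 - (p1+p2+p3)) * z (inord 1) ^+ (p1+q1) * z (inord 2) ^+ (p2+q2)
   * z (inord 3) ^+ (p3 + (L2 - (q1+q2))))%R.

Lemma prod_build4 (R : comNzRingType) (z : 'I_4 -> R) d : L2 <= L1 -> D4d d ->
  (\prod_(c : 'I_2 * 'I_L1 | incell [:: L1; L2] c.1 c.2) z (build4 d c) =
   mono4 z d.1.2 d.2 d.1.1.1.1 d.1.1.1.2 d.1.1.2)%R.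
Proof.
case: d => [[[[p3 q1] q2] p1] p2] hL; rewrite /D4d /D4 /= => hD.
set G := fun (i : 'I_2) (j : 'I_L1) => z (inord (tv4 L1 L2 p1 p2 p3 q1 q2 i j)).
rewrite (eq_bigr (fun c => G c.1 c.2)); last by move=> c _; rewrite ffunE.
rewrite -(pair_big_dep xpredT (fun (i : 'I_2) (j : 'I_L1) => incell [:: L1; L2] i j) G).
rewrite big_ord_recl big_ord_recl big_ord0 Monoid.mulm1 /G /incell /=.
rewrite -(big_mkord (fun j => j < L1) (fun j => z (inord (tv4 L1 L2 p1 p2 p3 q1 q2 0 j)))).
rewrite -(big_mkord (fun j => j < L2) (fun j => z (inord (tv4 L1 L2 p1 p2 p3 q1 q2 1 j)))).
rewrite -(big_nat_widen 0 L1 L1 xpredT) // -(big_nat_widen 0 L2 L1 xpredT) //.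
rewrite (@prod_split4 R _ (L1 - (p1+p2+p3)) (L1 - (p2+p3)) (L1 - p3) L1
   (z (inord 0)) (z (inord 1)) (z (inord 2)) (z (inord 3))); try lia;
  try (move=> j hj; congr (z (inord _)); rewrite /tv4 /=; lia).
rewrite (@prod_split4 R _ 0 q1 (q1 + q2) L2
   (z (inord 0)) (z (inord 1)) (z (inord 2)) (z (inord 3))); try lia;
  try (move=> j hj; congr (z (inord _)); rewrite /tv4 /=; case: ifP; lia).
rewrite /mono4.
have -> : L1 - (p2 + p3) - (L1 - (p1 + p2 + p3)) = p1 by lia.
have -> : L1 - p3 - (L1 - (p2 + p3)) = p2 by lia.
have -> : L1 - (L1 - p3) = p3 by lia.
have -> : q1 + q2 - q1 = q2 by lia.
rewrite subn0 expr0 !exprD.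
move: (z (inord 0) ^+ _)%R (z (inord 1) ^+ p1)%R (z (inord 1) ^+ q1)%R (z (inord 2) ^+ p2)%R
  (z (inord 2) ^+ q2)%R (z (inord 3) ^+ p3)%R (z (inord 3) ^+ (L2 - (q1 + q2)))%R => A B C D E F H.
ring.
Qed.

Lemma schur4E (R : comNzRingType) (z : 'I_4 -> R) : L2 <= L1 ->
  schur 4 [:: L1; L2] z =
  (\sum_(d : dat L1.+1 | D4d d) mono4 z d.1.2 d.2 d.1.1.1.1 d.1.1.1.2 d.1.1.2)%R.
Proof.
move=> hL; rewrite /schur (reindex_onto build4 counts4); last first.
  by move=> t ht; apply: build4_counts.
apply: eq_big => d.
- apply/idP/idP.
  + case/andP => hs /eqP he; rewrite -he; exact: counts4_D.
  + by move=> hD; rewrite build4_ssyt // counts4_build // eqxx.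
- case/andP => hs /eqP he.
  have hD : D4d d by rewrite -he; exact: counts4_D.
  exact: prod_build4.
Qed.

End Four.

Definition tv2 (M2 p0 i j : nat) : nat := if i == 0 then (p0 <= j : nat) else (j < M2 : nat).

Lemma tv2_lt M2 p0 i j : tv2 M2 p0 i j < 2.
Proof. rewrite /tv2; case: ifP => _; lia. Qed.

Section Two.
Variables M1 M2 : nat.

Definition build2 (d : 'I_M1.+1) : filling 2 [:: M1; M2] :=
  [ffun c : 'I_2 * 'I_M1 => inord (tv2 M2 d c.1 c.2)].

Lemma tval_build2 d i j : tval (build2 d) i j = tv2 M2 d i j.
Proof. by rewrite /tval ffunE; apply: inordK; apply: tv2_lt. Qed.

Definition cnt2 (t : filling 2 [:: M1; M2]) :=
  #|[set j : 'I_M1 | (j < M1) && (tval t r0 j < 1)]|.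

Definition counts2 (t : filling 2 [:: M1; M2]) : 'I_M1.+1 := inord (cnt2 t).

Lemma cnt2_le t : cnt2 t <= M1.
Proof. by rewrite /cnt2; apply: leq_trans (max_card _) _; rewrite card_ord. Qed.

Lemma build2_counts t : M2 <= M1 -> is_ssyt t -> build2 (counts2 t) = t.
Proof.
move=> hL hs; have [Z M0 _ C] := ssyt2P hs.
suff H : forall (i : 'I_2) (j : 'I_M1), tval (build2 (counts2 t)) i j = tval t i j.
  by apply/ffunP => -[i j]; apply: val_inj; exact: H.
move=> i j; rewrite tval_build2 /counts2 inordK; last by have := cnt2_le t; lia.
have hj := ltn_ord j.
case: (ord2P i) => -> /=; rewrite /tv2 /=.
- have e1 : (cnt2 t <= j) = (1 <= tval t r0 j) :=
    @cnt_le M1 M1 (tval t r0) j 1 (leqnn _) hj (fun a b h _ => M0 a b h).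
  have : tval t r0 j < 2 by exact: ltn_ord.
  lia.
- case: (ltnP j M2) => hjL; last by rewrite Z //; lia.
  have hC := C j hjL.
  have : tval t r1 j < 2 by exact: ltn_ord.
  lia.
Qed.

Lemma counts2_D t : M2 <= M1 -> is_ssyt t -> M2 <= counts2 t.
Proof.
move=> hL hs; have [Z M0 M1' C] := ssyt2P hs.
rewrite /counts2 inordK; last by have := cnt2_le t; lia.
rewrite -[X in X <= _](card_ord_lt hL).
apply: subset_leq_card; apply/subsetP => j; rewrite !inE => hj.
rewrite (ltn_ord j) /=; have := C j hj; have : tval t r1 j < 2 by exact: ltn_ord.
lia.
Qed.

Lemma build2_ssyt (d : 'I_M1.+1) : M2 <= M1 -> M2 <= d -> is_ssyt (build2 d).
Proof.
move=> hL hD; have hd := ltn_ord d.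
apply/andP; split.
- apply/forallP => -[i j]; rewrite /incell; have := ltn_ord j.
  rewrite -[val (build2 d (i, j))]/(tval (build2 d) i j) tval_build2.
  case: (ord2P i) => -> /=; rewrite /tv2 /=; lia.
- apply/forallP => -[i j]; apply/forallP => -[i' j']; rewrite /incell.
  rewrite -[val (build2 d (i, j))]/(tval (build2 d) i j) tval_build2.
  rewrite -[val (build2 d (i', j'))]/(tval (build2 d) i' j') tval_build2.
  have := ltn_ord j; have := ltn_ord j'.
  case: (ord2P i) => ->; case: (ord2P i') => -> /=; rewrite /tv2 /=; lia.
Qed.

Lemma counts2_build (d : 'I_M1.+1) : M2 <= M1 -> M2 <= d -> counts2 (build2 d) = d.
Proof.
move=> hL hD; have hd := ltn_ord d; apply: val_inj => /=.
rewrite /counts2 /cnt2 inordK.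
  rewrite -[RHS](card_ord_lt (m := d) (L := M1)); last by lia.
  apply: eq_card => j; rewrite !inE tval_build2 /tv2 /= (ltn_ord j); lia.
rewrite (_ : #|_| = d) //.
rewrite -[RHS](card_ord_lt (m := d) (L := M1)); last by lia.
apply: eq_card => j; rewrite !inE tval_build2 /tv2 /= (ltn_ord j); lia.
Qed.

Definition mono2 (R : comNzRingType) (z : 'I_2 -> R) (p0 : nat) : R :=
  (z (inord 0) ^+ p0 * z (inord 1) ^+ (M1 - p0 + M2))%R.

Lemma prod_build2 (R : comNzRingType) (z : 'I_2 -> R) (d : 'I_M1.+1) : M2 <= M1 -> M2 <= d ->
  (\prod_(c : 'I_2 * 'I_M1 | incell [:: M1; M2] c.1 c.2) z (build2 d c) = mono2 z d)%R.
Proof.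
move=> hL hD; have hd := ltn_ord d.
set G := fun (i : 'I_2) (j : 'I_M1) => z (inord (tv2 M2 d i j)).
rewrite (eq_bigr (fun c => G c.1 c.2)); last by move=> c _; rewrite ffunE.
rewrite -(pair_big_dep xpredT (fun (i : 'I_2) (j : 'I_M1) => incell [:: M1; M2] i j) G).
rewrite big_ord_recl big_ord_recl big_ord0 Monoid.mulm1 /G /incell /=.
rewrite -(big_mkord (fun j => j < M1) (fun j => z (inord (tv2 M2 d 0 j)))).
rewrite -(big_mkord (fun j => j < M2) (fun j => z (inord (tv2 M2 d 1 j)))).
rewrite -(big_nat_widen 0 M1 M1 xpredT) // -(big_nat_widen 0 M2 M1 xpredT) //.
rewrite (@prod_split4 R _ d M1 M1 M1
   (z (inord 0)) (z (inord 1)) (z (inord 1)) (z (inord 1))); try lia;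
  try (move=> j hj; congr (z (inord _)); rewrite /tv2 /=; lia).
rewrite (@prod_split4 R _ 0 M2 M2 M2
   (z (inord 0)) (z (inord 1)) (z (inord 1)) (z (inord 1))); try lia;
  try (move=> j hj; congr (z (inord _)); rewrite /tv2 /=; lia).
rewrite /mono2 !subnn subn0 !expr0 !mulr1 mul1r exprD.
move: (z (inord 0) ^+ d)%R (z (inord 1) ^+ (M1 - d))%R (z (inord 1) ^+ M2)%R => A B C; ring.
Qed.

Lemma schur2E (R : comNzRingType) (z : 'I_2 -> R) : M2 <= M1 ->
  schur 2 [:: M1; M2] z = (\sum_(d : 'I_M1.+1 | (M2 <= d)%N) mono2 z d)%R.
Proof.
move=> hL; rewrite /schur (reindex_onto build2 counts2); last first.
  by move=> t ht; apply: build2_counts.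
apply: eq_big => d.
- apply/idP/idP.
  + case/andP => hs /eqP he; rewrite -he; exact: counts2_D.
  + by move=> hD; rewrite build2_ssyt // counts2_build // eqxx.
- case/andP => hs /eqP he.
  have hD : M2 <= d by rewrite -he; exact: counts2_D.
  exact: prod_build2.
Qed.

End Two.


Lemma core (L1 L2 K L p1 p2 p3 q1 q2 : nat) : L2 <= L1 -> K + L <= L1 + 2 ->
  (D4 L1 L2 p1 p2 p3 q1 q2 &&
    (((((L1 + L2).+1 - K == L1 - (p1+p2+p3) + (p1 + q1)) &&
       ((L1 + L2) - ((L1 + L2).+1-K) == p2 + q2 + (p3 + (L2 - (q1+q2)))))
      && ((L1 + L2).+1 - L == L1 - (p1+p2+p3) + (p2 + q2))) &&
      ((L1 + L2) - ((L1 + L2).+1 - L) == p1 + q1 + (p3 + (L2 - (q1+q2))))))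
  = ((p2 == K - 1 - (p3 + (L2 - q1))) && ((p1 == L - 1 - (p3 + (L2 - q2))) &&
      [&& q1 + q2 <= L2, p3 + (L2 - q1) < K & p3 + (L2 - q2) < L])).
Proof.
move=> hL hKL; rewrite /D4.
apply/idP/idP.
- case/andP => /and5P[d1 d2 d3 d4 d5] /andP[/andP[/andP[/eqP m1 /eqP m2] /eqP m3] /eqP m4].
  apply/andP; split; [|apply/andP; split; [|apply/and3P; split]]; try apply/eqP; lia.
- case/andP => /eqP h2 /andP[/eqP h1 /and3P[h3 h4 h5]].
  apply/andP; split; [apply/and5P; split | apply/andP; split; [apply/andP; split;
   [apply/andP; split|]|]]; try apply/eqP; lia.
Qed.


Local Open Scope ring_scope.

Definition mono (i j m n : nat) : Rxy := x1 ^+ i * x2 ^+ j * y1 ^+ m * y2 ^+ n.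
Definition Cf (p : Rxy) (a b c d : nat) : int := p`_a`_b`_c`_d.

Lemma coef_XnC (R : comNzRingType) (Q : R) (i a : nat) :
  ('X^i * Q%:P)`_a = if a == i then Q else 0.
Proof. by rewrite mulrC coefCM coefXn; case: eqP => _; rewrite ?mulr1 ?mulr0. Qed.

Lemma monoE i j m n : mono i j m n =
  'X^i * ('X^j * ('X^m * ('X^n)%:P)%:P)%:P.
Proof.
rewrite /mono /x1 /x2 /y1 /y2 !polyCM !polyC_exp.
by rewrite -!mulrA.
Qed.

Lemma Cf_mono i j m n a b c d :
  Cf (mono i j m n) a b c d = ((a == i) && (b == j) && (c == m) && (d == n))%:R.
Proof.
rewrite /Cf monoE coef_XnC; case: (a == i) => /=; last by rewrite !coef0.
rewrite coef_XnC; case: (b == j) => /=; last by rewrite !coef0.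
rewrite coef_XnC; case: (c == m) => /=; last by rewrite !coef0.
by rewrite coefXn.
Qed.

Lemma Cf_sum (I : Type) (r : seq I) (P : pred I) (F : I -> Rxy) a b c d :
  Cf (\sum_(i <- r | P i) F i) a b c d = \sum_(i <- r | P i) Cf (F i) a b c d.
Proof. by rewrite /Cf !coef_sum. Qed.

Lemma Cf_Mz (g : int) p a b c d : Cf (g%:~R * p) a b c d = g * Cf p a b c d.
Proof. by rewrite /Cf mulrzl !coefMrz mulrzz mulrC. Qed.

Lemma natz_bool (b : bool) : (b%:R : int) = Posz b.
Proof. by case: b. Qed.

Lemma dd_ind (x y K0 L0 : nat) :
  ((x < K0.+1) && (y < L0.+1))%N%:R - ((x < K0) && (y < L0.+1))%N%:R
  - ((x < K0.+1) && (y < L0))%N%:R + ((x < K0) && (y < L0))%N%:R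
  = ((x == K0) && (y == L0))%:R :> int.
Proof. rewrite !natz_bool; lia. Qed.

Lemma dd_sum (I : finType) (F : I -> int) (x y : I -> nat) K0 L0 :
  \sum_i F i * ((x i < K0.+1) && (y i < L0.+1))%N%:R
  - \sum_i F i * ((x i < K0) && (y i < L0.+1))%N%:R
  - \sum_i F i * ((x i < K0.+1) && (y i < L0))%N%:R
  + \sum_i F i * ((x i < K0) && (y i < L0))%N%:R
  = \sum_i F i * ((x i == K0) && (y i == L0))%:R.
Proof.
rewrite -!sumrB -big_split /=; apply: eq_bigr => i _.
by rewrite -!mulrBr -mulrDr dd_ind.
Qed.

Lemma sum_pick (B X : nat) (P : bool) :
  \sum_(i < B) ((nat_of_ord i == X) && P)%:R = ((X < B)%N && P)%:R :> int.
Proof.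
case: (ltnP X B) => hX /=.
- rewrite (bigD1 (Ordinal hX)) //= eqxx /= big1 ?addr0 // => i hi.
  have -> : (i == X :> nat) = false.
    by apply/negbTE; apply: contra hi => /eqP h; apply/eqP/val_inj.
  by [].
- rewrite big1 // => i _.
  have -> : (i == X :> nat) = false by apply/negbTE; have := ltn_ord i; lia.
  by [].
Qed.

Lemma sum_pair (R : nmodType) (I J : finType) (F : I * J -> R) :
  \sum_(p : I * J) F p = \sum_(i : I) \sum_(j : J) F (i, j).
Proof. by rewrite pair_big; apply: eq_bigr => -[i j]. Qed.

Lemma sum_pick_f (B X : nat) (Pf : pred nat) (P : bool) :
  \sum_(i < B | Pf i) ((nat_of_ord i == X) && P)%:R = ((X < B)%N && Pf X && P)%:R :> int.
Proof.
rewrite big_mkcond /=.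
rewrite (eq_bigr (fun i : 'I_B => ((nat_of_ord i == X) && (Pf X && P))%:R)).
  by rewrite sum_pick andbA.
move=> i _; case: eqP => [->|_] /=; [by case: (Pf X) | by case: (Pf i)].
Qed.

Lemma xs0 : xs (inord 0) = x1. Proof. by rewrite /xs inordK. Qed.
Lemma xs1 : xs (inord 1) = x2. Proof. by rewrite /xs inordK. Qed.
Lemma ys0 : ys (inord 0) = y1. Proof. by rewrite /ys inordK. Qed.
Lemma ys1 : ys (inord 1) = y2. Proof. by rewrite /ys inordK. Qed.

Lemma Cf_schur2 (N k l K L : nat) : (k <= N./2)%N -> (l <= N./2)%N ->
  (K <= N./2.+1)%N -> (L <= N./2.+1)%N ->
  Cf (schur 2 [:: (N - k)%N; k] xs * schur 2 [:: (N - l)%N; l] ys)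
     (N.+1 - K)%N (N - (N.+1 - K))%N (N.+1 - L)%N (N - (N.+1 - L))%N
  = ((k < K) && (l < L))%N%:R.
Proof.
move=> hk hl hK hL.
have h2 : (2 * N./2 <= N)%N by rewrite mul2n -[X in (_ <= X)%N](odd_double_half N) leq_addl.
move: (N./2) hk hl hK hL h2 => h hk hl hK hL h2.
rewrite (@schur2E (N - k)%N k _ xs); last by lia.
rewrite (@schur2E (N - l)%N l _ ys); last by lia.
rewrite big_distrl Cf_sum /=.
under eq_bigr => i _ do rewrite big_distrr Cf_sum /=.
have Hm : forall i m : nat, mono2 (N - k)%N k xs i * mono2 (N - l)%N l ys m =
   mono i (N - k - i + k)%N m (N - l - m + l)%N.
  by move=> i m; rewrite /mono2 xs0 xs1 ys0 ys1 /mono !mulrA.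
under eq_bigr => i _ do under eq_bigr => m _ do rewrite Hm Cf_mono.
rewrite (eq_bigr (fun i : 'I_(N - k)%N.+1 =>
   \sum_(m < (N - l)%N.+1 | (l <= m)%N) ((nat_of_ord m == (N.+1 - L)%N) &&
      ((nat_of_ord i == (N.+1 - K)%N) && (N - (N.+1 - K) == N - i)%N
       && (N - (N.+1 - L) == N - (N.+1 - L))%N))%:R)); last first.
  move=> i hi; apply: eq_bigr => m hm; congr (_%:R).
  have -> : (N - k - i + k)%N = (N - i)%N by have := ltn_ord i; lia.
  have -> : (N - l - m + l)%N = (N - m)%N by have := ltn_ord m; lia.
  rewrite (eq_sym (nat_of_ord m)) (eq_sym (nat_of_ord i)) eqxx andbT.
  case hmm: ((N.+1 - L)%N == m); last by rewrite /= !andbF.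
  by move/eqP: hmm => <-; rewrite eqxx /= !andbT.
under eq_bigr => i _ do rewrite sum_pick_f.
rewrite (eq_bigr (fun i : 'I_(N - k)%N.+1 =>
   ((nat_of_ord i == (N.+1 - K)%N) && ((N.+1 - L < (N - l).+1)%N && (l <= N.+1 - L)%N))%:R)); last first.
  move=> i hi; congr (_%:R); have := ltn_ord i; lia.
rewrite sum_pick_f; congr (_%:R); lia.
Qed.

Lemma Cf_RHS (N : nat) (F : 'I_(N./2.+1) -> 'I_(N./2.+1) -> int) K L :
  (K <= N./2.+1)%N -> (L <= N./2.+1)%N ->
  Cf (\sum_(k < N./2.+1) \sum_(l < N./2.+1) (F k l)%:~R *
        (schur 2 [:: (N - k)%N; nat_of_ord k] xs * schur 2 [:: (N - l)%N; nat_of_ord l] ys))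
     (N.+1 - K)%N (N - (N.+1 - K))%N (N.+1 - L)%N (N - (N.+1 - L))%N
  = \sum_(p : 'I_(N./2.+1) * 'I_(N./2.+1)) F p.1 p.2 * ((p.1 < K) && (p.2 < L))%N%:R.
Proof.
move=> hK hL; rewrite sum_pair Cf_sum; apply: eq_bigr => k _.
rewrite Cf_sum; apply: eq_bigr => l _ /=.
by rewrite Cf_Mz Cf_schur2 // -ltnS ltn_ord.
Qed.

Lemma pick2 (M : nat) (F : 'I_M -> 'I_M -> int) (a b : 'I_M) :
  \sum_(p : 'I_M * 'I_M) F p.1 p.2 * ((nat_of_ord p.1 == a) && (nat_of_ord p.2 == b))%N%:R
  = F a b.
Proof.
rewrite (bigD1 (a, b)) //= !eqxx mulr1 big1 ?addr0 // => -[i j] /= hij.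
have -> : ((nat_of_ord i == a) && (nat_of_ord j == b)) = false.
  apply/negbTE; apply: contra hij => /andP[/eqP h1 /eqP h2].
  by apply/eqP; congr (_, _); apply: val_inj.
by rewrite mulr0.
Qed.

Lemma RHS_extract (N : nat) (F : 'I_(N./2.+1) -> 'I_(N./2.+1) -> int) (a b : 'I_(N./2.+1)) :
  let C K L := Cf (\sum_(k < N./2.+1) \sum_(l < N./2.+1) (F k l)%:~R *
        (schur 2 [:: (N - k)%N; nat_of_ord k] xs * schur 2 [:: (N - l)%N; nat_of_ord l] ys))
     (N.+1 - K)%N (N - (N.+1 - K))%N (N.+1 - L)%N (N - (N.+1 - L))%N in
  C a.+1 b.+1 - C a b.+1 - C a.+1 b + C a b = F a b.
Proof.
have ha := ltn_ord a; have hb := ltn_ord b.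
rewrite /= !Cf_RHS //; try lia.
rewrite (dd_sum (fun p : 'I_(N./2.+1) * 'I_(N./2.+1) => F p.1 p.2)
  (fun p => nat_of_ord p.1) (fun p => nat_of_ord p.2)).
exact: pick2.
Qed.



Local Open Scope ring_scope.

Lemma mono_gen (R : comNzRingType) (a b c d : R) e0 e1 e2 e3 :
  (a*c)^+e0 * (a*d)^+e1 * (b*c)^+e2 * (b*d)^+e3 =
  a^+(e0+e1) * b^+(e2+e3) * c^+(e0+e2) * d^+(e1+e3).
Proof.
rewrite !exprMn !exprD.
move: (a ^+ e0) (a ^+ e1) (b ^+ e2) (b ^+ e3) (c ^+ e0) (c ^+ e2) (d ^+ e1) (d ^+ e3)
  => A B C D E F G H.
ring.
Qed.

Lemma mono4_xys L1 L2 p1 p2 p3 q1 q2 : mono4 L1 L2 xys p1 p2 p3 q1 q2 =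
  mono (L1 - (p1+p2+p3) + (p1 + q1)) (p2 + q2 + (p3 + (L2 - (q1+q2))))
       (L1 - (p1+p2+p3) + (p2 + q2)) (p1 + q1 + (p3 + (L2 - (q1+q2)))).
Proof.
rewrite /mono4 /mono /xys !inordK //=.
exact: mono_gen.
Qed.
Lemma Cf_LHS L1 L2 K L : (L2 <= L1)%N -> (K + L <= L1 + 2)%N ->
  Cf (schur 4 [:: L1; L2] xys) ((L1+L2).+1 - K)%N ((L1+L2) - ((L1+L2).+1 - K))%N
     ((L1+L2).+1 - L)%N ((L1+L2) - ((L1+L2).+1 - L))%N =
  \sum_(e : 'I_L1.+1 * 'I_L1.+1 * 'I_L1.+1)
     ((e.1.2 + e.2 <= L2)%N)%:R * ((e.1.1 + (L2 - e.1.2) < K) && (e.1.1 + (L2 - e.2) < L))%N%:R.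
Proof.
move=> hL hKL; rewrite schur4E // Cf_sum big_mkcond /= sum_pair sum_pair.
apply: eq_bigr => -[[p3 q1] q2] _ /=.
rewrite (eq_bigr (fun p1 : 'I_L1.+1 => \sum_(p2 < L1.+1)
   ((nat_of_ord p2 == K - 1 - (p3 + (L2 - q1)))%N && ((nat_of_ord p1 == L - 1 - (p3 + (L2 - q2)))%N &&
     [&& (q1 + q2 <= L2)%N, (p3 + (L2 - q1) < K)%N & (p3 + (L2 - q2) < L)%N]))%:R)); last first.
  move=> p1 _; apply: eq_bigr => p2 _.
  rewrite /D4d /= mono4_xys Cf_mono -(@core L1 L2 K L p1 p2 p3 q1 q2) //.
  by case: (D4 _ _ _ _ _ _ _).
under eq_bigr => p1 _ do rewrite sum_pick andbCA.
rewrite sum_pick -natrM mulnb; congr (_%:R).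
case: (q1 + q2 <= L2)%N; case: (p3 + (L2 - q1) < K)%N / leqP; case: (p3 + (L2 - q2) < L)%N / leqP => //=; lia.
Qed.

Lemma LHS_extract L1 L2 K0 L0 : (L2 <= L1)%N -> (K0 + L0 <= L1)%N ->
  let C K L := Cf (schur 4 [:: L1; L2] xys) ((L1+L2).+1 - K)%N ((L1+L2) - ((L1+L2).+1 - K))%N
     ((L1+L2).+1 - L)%N ((L1+L2) - ((L1+L2).+1 - L))%N in
  C K0.+1 L0.+1 - C K0 L0.+1 - C K0.+1 L0 + C K0 L0 =
  \sum_(e : 'I_L1.+1 * 'I_L1.+1 * 'I_L1.+1)
     (((e.1.2 + e.2 <= L2)%N)%:R : int) * ((e.1.1 + (L2 - e.1.2) == K0) && (e.1.1 + (L2 - e.2) == L0))%N%:R.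
Proof.
move=> hL hKL /=; rewrite !Cf_LHS //; try lia.
exact: (dd_sum (fun e : 'I_L1.+1 * 'I_L1.+1 * 'I_L1.+1 => ((e.1.2 + e.2 <= L2)%N)%:R)
  (fun e => e.1.1 + (L2 - e.1.2))%N (fun e => e.1.1 + (L2 - e.2))%N).
Qed.

Lemma sum_lt (B c : nat) : (c <= B)%N -> \sum_(i < B) ((i < c)%N%:R : int) = c%:R.
Proof.
move=> hc.
rewrite -(big_mkord xpredT (fun i => ((i < c)%N%:R : int))).
rewrite (eq_bigr (fun i => if (i < c)%N then 1 else 0)); last by move=> i _; case: (i < c)%N.
rewrite -big_mkcond /= -(big_nat_widen 0 c B xpredT) //.
by rewrite sumr_const_nat subn0.
Qed.

Lemma count_final L1 L2 K0 L0 : (K0 <= L2)%N -> (L0 <= L2)%N -> (K0 + L0 <= L1)%N ->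
  \sum_(e : 'I_L1.+1 * 'I_L1.+1 * 'I_L1.+1)
     (((e.1.2 + e.2 <= L2)%N)%:R : int) * ((e.1.1 + (L2 - e.1.2) == K0) && (e.1.1 + (L2 - e.2) == L0))%N%:R
  = (if (L2 <= K0 + L0)%N then ((K0 + L0 - L2) %/ 2).+1 else 0%N)%:R :> int.
Proof.
move=> hK hL hKL; rewrite sum_pair sum_pair.
rewrite (eq_bigr (fun p3 : 'I_L1.+1 => \sum_(q1 < L1.+1) \sum_(q2 < L1.+1)
   ((nat_of_ord q2 == p3 + L2 - L0)%N && ((nat_of_ord q1 == p3 + L2 - K0)%N &&
      (2 * p3 + L2 <= K0 + L0)%N))%:R)); last first.
  move=> p3 _; apply: eq_bigr => q1 _; apply: eq_bigr => q2 _ /=.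
  rewrite -natrM mulnb; congr (_%:R).
  congr (nat_of_bool _); apply/idP/idP.
  - case/andP => h1 /andP[/eqP h2 /eqP h3]; apply/andP; split; [|apply/andP; split]; try apply/eqP; lia.
  - case/andP => /eqP h1 /andP[/eqP h2 h3]; apply/andP; split; [|apply/andP; split]; try apply/eqP; lia.
under eq_bigr => p3 _ do under eq_bigr => q1 _ do rewrite sum_pick andbCA.
under eq_bigr => p3 _ do rewrite sum_pick.
rewrite (eq_bigr (fun p3 : 'I_L1.+1 => ((p3 < if (L2 <= K0 + L0)%N then ((K0 + L0 - L2) %/ 2).+1 else 0%N)%N)%:R)).
  by rewrite sum_lt //; case: ifP; lia.
move=> p3 _; congr (_%:R); have := ltn_ord p3.
case: ifP => h; lia.
Qed.


Local Open Scope ring_scope.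

Lemma sum_bound (C M : nat) (F : nat -> int) : (M <= C)%N ->
  (forall i, (M <= i)%N -> F i = 0) -> \sum_(i < C) F i = \sum_(i < M) F i.
Proof.
move=> hM hF; rewrite (big_ord_widen C F hM) [RHS]big_mkcond /=.
apply: eq_bigr => i _; case: ifP => // h; rewrite hF //; lia.
Qed.

Lemma pS_sum n m : (m <= n)%N ->
  (pS_nat n m)%:R = \sum_(x3 < m.+1) \sum_(x4 < m.+1) ((x3 + 2 * x4 <= m)%N)%:R :> int.
Proof.
move=> hmn; rewrite /pS_nat -sum1_card natr_sum big_mkcond /=.
rewrite (eq_bigr (fun x : 'I_(n + m).+1 * 'I_(n + m).+1 * 'I_(n + m).+1 * 'I_(n + m).+1 =>
  (((x.1.1.1 + x.1.2 + x.2 == n) && (x.1.1.2 + x.1.2 + 2 * x.2 == m))%N)%:R)); last first.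
  by move=> x _; rewrite inE; case: ifP.
rewrite !sum_pair /=.
under eq_bigr => x1 _ do rewrite exchange_big.
under eq_bigr => x1 _ do under eq_bigr => x3 _ do rewrite exchange_big.
rewrite exchange_big /=.
under eq_bigr => x3 _ do rewrite exchange_big.
rewrite (eq_bigr (fun x3 : 'I_(n + m).+1 => \sum_(x4 < (n + m).+1) \sum_(x1 < (n + m).+1)
   \sum_(x2 < (n + m).+1) ((nat_of_ord x2 == m - x3 - 2 * x4)%N &&
     ((nat_of_ord x1 == n - x3 - x4)%N && (x3 + 2 * x4 <= m)%N))%:R)); last first.
  move=> x3 _; apply: eq_bigr => x4 _; apply: eq_bigr => x1 _; apply: eq_bigr => x2 _.
  congr (_%:R); congr (nat_of_bool _); apply/idP/idP.
  - case/andP => /eqP h1 /eqP h2; apply/andP; split; [|apply/andP; split]; try apply/eqP; lia.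
  - case/andP => /eqP h1 /andP[/eqP h2 h3]; apply/andP; split; apply/eqP; lia.
under eq_bigr => x3 _ do under eq_bigr => x4 _ do under eq_bigr => x1 _ do
  rewrite sum_pick andbCA.
under eq_bigr => x3 _ do under eq_bigr => x4 _ do rewrite sum_pick.
rewrite (eq_bigr (fun x3 : 'I_(n + m).+1 => \sum_(x4 < (n + m).+1)
   ((x3 + 2 * x4 <= m)%N)%:R)); last first.
  move=> x3 _; apply: eq_bigr => x4 _; congr (_%:R); congr (nat_of_bool _).
  have := ltn_ord x3; have := ltn_ord x4; case: (x3 + 2 * x4 <= m)%N; lia.
rewrite (sum_bound (M := m.+1) (F := fun x3 : nat => \sum_(x4 < (n + m).+1)
   ((x3 + 2 * x4 <= m)%N)%:R : int)); [|lia|].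
  apply: eq_bigr => x3 _.
  rewrite (sum_bound (M := m.+1) (F := fun x4 : nat => ((x3 + 2 * x4 <= m)%N)%:R : int)) //; first lia.
  move=> i hi; case: leqP => //; lia.
move=> i hi; apply: big1 => x4 _; case: leqP => //; lia.
Qed.


Lemma pS_zero n : (pS_nat n 0)%:R = 1 :> int.
Proof. by rewrite pS_sum // !big_ord1. Qed.

Lemma pS_step n m : (m.+1 <= n)%N ->
  (pS_nat n m.+1)%:R - (pS_nat n m)%:R = ((m.+1 %/ 2).+1)%:R :> int.
Proof.
move=> hmn; rewrite !pS_sum //; last by lia.
rewrite -[X in _ - X](sum_bound (C := m.+2) (M := m.+1) (F := fun x3 : nat =>
   \sum_(x4 < m.+1) ((x3 + 2 * x4 <= m)%N)%:R : int)); [|lia|]; last first.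
  by move=> i hi; apply: big1 => x4 _; case: leqP => //; lia.
rewrite -sumrB.
rewrite (eq_bigr (fun x3 : 'I_m.+2 => \sum_(x4 < m.+2) ((x3 + 2 * x4 == m.+1)%N)%:R)); last first.
  move=> x3 _.
  rewrite -[X in _ - X](sum_bound (C := m.+2) (M := m.+1) (F := fun x4 : nat =>
   ((x3 + 2 * x4 <= m)%N)%:R : int)); [|lia|]; last first.
    by move=> i hi; case: leqP => //; lia.
  rewrite -sumrB; apply: eq_bigr => x4 _.
  rewrite !natz_bool; lia.
rewrite exchange_big /=.
rewrite (eq_bigr (fun x4 : 'I_m.+2 => \sum_(x3 < m.+2)
   ((nat_of_ord x3 == m.+1 - 2 * x4)%N && (2 * x4 <= m.+1)%N)%:R)); last first.
  move=> x4 _; apply: eq_bigr => x3 _; congr (_%:R); congr (nat_of_bool _).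
  apply/idP/idP; [move/eqP => h; apply/andP; split; [apply/eqP|]; lia
                 | case/andP => /eqP h1 h2; apply/eqP; lia].
under eq_bigr => x4 _ do rewrite sum_pick.
rewrite (eq_bigr (fun x4 : 'I_m.+2 => ((x4 < (m.+1 %/ 2).+1)%N)%:R)); last first.
  move=> x4 _; congr (_%:R); congr (nat_of_bool _).
  apply/idP/idP; [case/andP => _ h; lia | move=> h; apply/andP; split; lia].
by rewrite sum_lt //; lia.
Qed.

Local Close Scope ring_scope.
Unset Implicit Arguments.

Theorem proposition3p7 (lam2 mu2 nu2 : nat)
  (g : seq nat -> seq nat -> seq nat -> int) :
  kronecker_spec g ->
  mu2 <= lam2 -> nu2 <= mu2 ->
  let gl := fun lam1 : nat =>
    g [:: (lam1 + lam2 - mu2)%N; mu2] [:: (lam1 + lam2 - nu2)%N; nu2]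
      [:: lam1; lam2] in
  let l : int := (Posz nu2 + Posz mu2 - Posz lam2)%R in
  let stable : int :=
    (Posz (pS (Posz nu2) l) - Posz (pS (Posz nu2) (l - 1)%R))%R in
  (forall lam1 lam1' : nat, lam2 <= lam1 -> lam2 <= lam1' ->
     mu2 + nu2 <= lam1 -> mu2 + nu2 <= lam1' -> gl lam1 = gl lam1') /\
  (forall lam1 : nat, lam2 <= lam1 -> mu2 + nu2 <= lam1 -> gl lam1 = stable) /\
  stable = (if (0 <= l)%R then Posz (absz l)./2.+1 else Posz 0).
Proof.
move=> spec hmu hnu gl l stable.
pose V : int := Posz (if (lam2 <= mu2 + nu2)%N then ((mu2 + nu2 - lam2) %/ 2).+1 else 0%N).
have key : forall lam1, lam2 <= lam1 -> mu2 + nu2 <= lam1 -> gl lam1 = V.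
  move=> lam1 h1 h2.
  have hs : sorted geq [:: lam1; lam2] by rewrite /= andbT.
  move: (spec [:: lam1; lam2] isT hs); rewrite /= addn0 => E.
  have ha : mu2 < (lam1 + lam2)./2.+1 by rewrite ltnS geq_half_double -muln2; lia.
  have hb : nu2 < (lam1 + lam2)./2.+1 by rewrite ltnS geq_half_double -muln2; lia.
  pose a : 'I_((lam1 + lam2)./2.+1) := Ordinal ha.
  pose b : 'I_((lam1 + lam2)./2.+1) := Ordinal hb.
  pose F := fun (k l : 'I_((lam1 + lam2)./2.+1)) => g [:: (lam1 + lam2 - k)%N; nat_of_ord k]
     [:: (lam1 + lam2 - l)%N; nat_of_ord l] [:: lam1; lam2].
  have R := RHS_extract F a b.
  have Lx := @LHS_extract lam1 lam2 mu2 nu2 h1 h2.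
  simpl in R, Lx.
  rewrite -E Lx count_final // in R; try lia.
  rewrite /gl -[g _ _ _]/(F a b) -R natz //.
have hst : stable = V /\ (if (0 <= l)%R then Posz (absz l)./2.+1 else Posz 0) = V.
  rewrite /stable /V; case: (leqP lam2 (mu2 + nu2)) => hle.
  - have hl : l = Posz (mu2 + nu2 - lam2) by rewrite /l; lia.
    rewrite hl /= divn2; split => //.
    case hm: (mu2 + nu2 - lam2) => [|m].
    + have -> : (Posz 0 - 1)%R = Negz 0 by reflexivity.
      by rewrite /= -natz pS_zero.
    + have -> : (Posz m.+1 - 1)%R = Posz m by lia.
      rewrite /= -!natz pS_step ?natz ?divn2 //; lia.
  - have hl : l = Negz (lam2 - (mu2 + nu2)).-1 by rewrite /l NegzE; lia.
    have hl1 : (l - 1)%R = Negz (lam2 - (mu2 + nu2)) by rewrite hl !NegzE; lia.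
    rewrite hl1 hl /=; split => //.
case: hst => hst1 hst2.
split; [|split].
- move=> a b ha hb ha' hb'; by rewrite !key.
- move=> a ha ha'; by rewrite key // hst1.
- by rewrite hst1 hst2.
Qed.
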